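(* Let $R$ be a binary relation on a set $A$ satisfying $\mathbf{WFminDNE}\lnot\lnot$. If either $R$ is finitely branching (for every $x$ there is a finite list containing every $y$ with $R\,y\,x$) or accessibility is $\lnot\lnot$-closed ($\mathbf{accDNE}$), then $R$ satisfies $\mathbf{WFacc}\lnot\lnot$.
   Context: Work in constructive (intuitionistic) logic / Martin-Löf type theory without excluded middle or other axioms. Let $R$ be a binary relation on $A$ (think of $R\,y\,x$ as a reduction step from $x$ to $y$). Accessibility is defined inductively: $x$ is accessible if every $y$ with $R\,y\,x$ is accessible. For $P\subseteq A$: $x$ is $P$-minimal if $x\in P$ and for all $y$, $R\,y\,x$ implies $y\notin P$; $P$ is $\lnot\lnot$-closed if $\lnot\lnot(x\in P)$ implies $x\in P$; $P$ is nonempty if some $x\in P$. $\mathbf{WFminDNE}\lnot\lnot$: for every nonempty $\lnot\lnot$-closed $P$, $\lnot\lnot(\exists x.\ x$ is $P$-minimal$)$. $\mathbf{WFacc}\lnot\lnot$: for every $x$, $\lnot\lnot(x$ accessible$)$. $\mathbf{accDNE}$: for all $x$, $\lnot\lnot(x$ accessible$)$ implies $x$ accessible. *)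

(* Defs.v *)
From Stdlib Require Import List.

Section Defs.
Context {A : Type} (R : A -> A -> Prop).

Definition minimal (P : A -> Prop) (x : A) : Prop :=
  P x /\ forall y, R y x -> ~ P y.

Definition dnclosed (P : A -> Prop) : Prop :=
  forall x, ~ ~ P x -> P x.

Definition nonempty (P : A -> Prop) : Prop := exists x, P x.

Definition WFminDNE_nn : Prop :=
  forall P : A -> Prop, nonempty P -> dnclosed P ->
    ~ ~ (exists x, minimal P x).

Definition WFacc_nn : Prop := forall x, ~ ~ Acc R x.

Definition accDNE : Prop := forall x, ~ ~ Acc R x -> Acc R x.

Definition finitely_branching : Prop :=
  forall x, exists l : list A, forall y, R y x -> In y l.
End Defs.

(* Main.v *)
Require Import Defs.
From Stdlib Require Import List.

Lemma nn_imp (P Q : Prop) : (P -> ~ ~ Q) -> ~ ~ (P -> Q).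
Proof.
  intros H N. apply N. intro p. exfalso. apply (H p). intro q. apply N. intros _. exact q.
Qed.

Lemma nn_list {A : Type} (Q : A -> Prop) (l : list A) :
  (forall y, ~ ~ Q y) -> ~ ~ (forall y, In y l -> Q y).
Proof.
  intros H. induction l as [|a l IH]; intro N.
  - apply N. intros y [].
  - apply IH. intro Hl. apply (H a). intro qa. apply N.
    intros y [<-|Hy]; auto.
Qed.

Theorem mainTheorem18 (A : Type) (R : A -> A -> Prop) :
  WFminDNE_nn R ->
  (finitely_branching R \/ accDNE R) ->
  WFacc_nn R.
Proof.
  intros Hmin Hor x0 Hx0.
  apply (Hmin (fun x => ~ Acc R x)).
  - exists x0. exact Hx0.
  - intros x N a. apply N. intro na. exact (na a).
  - intros [m [Hm Hpred]].
    destruct Hor as [Hfb | Hdne].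
    + destruct (Hfb m) as [l Hl].
      apply (nn_list (fun y => R y m -> Acc R y) l).
      * intro y. apply nn_imp. intro r. exact (Hpred y r).
      * intro Hall. apply Hm. constructor. intros y r. exact (Hall y (Hl y r) r).
    + apply Hm. constructor. intros y r. apply Hdne. exact (Hpred y r).
Qed.
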